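(* Let $K$ be a compact Hausdorff space, $B$ the open unit ball of $C(K)$, $f_0\in B$, and $T(f)=\frac{f-f_0}{1-\overline{f_0}f}$ for $f\in B$. Let $H(B)$ denote either $A_u(B)$ or $H^\infty(B)$. Then $\psi\circ T\in H(B)$ for every $\psi\in H(B)$, so $\hat T:M_{H(B)}\to M_{H(B)}$, $\hat T(\tau)(\psi)=\tau(\psi\circ T)$, is well defined, and $\hat T$ maps $\mathcal M_{f_0}(B)$ onto $\mathcal M_0(B)$.
   Context: $A_u(B)$ is the uniform algebra of bounded holomorphic functions on $B$ that are uniformly continuous on $B$; $H^\infty(B)$ is the uniform algebra of all bounded holomorphic functions on $B$. $M_{H(B)}$ is the spectrum (nonzero multiplicative linear functionals) of $H(B)$. For $g_0\in B$, $\mathcal M_{g_0}(B)=\{\tau\in M_{H(B)}:\ \tau(g)=g(g_0)\ \text{for all } g\in A_u(B)\}$. *)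

(* Defs.v *)
From mathcomp Require Import all_boot all_algebra all_classical all_reals all_analysis.
From mathcomp Require Export complex.
Import GRing.Theory Num.Theory.
Set Implicit Arguments. Unset Strict Implicit. Unset Printing Implicit Defensive.
Local Open Scope ring_scope.
Local Open Scope classical_set_scope.
Local Open Scope complex_scope.

Section Defs.
Variables (R : realType) (K : topologicalType).

Definition cnorm (z : R[i]) : R := complex.Re `|z|.

Definition ccont (g : K -> R[i]) : Prop :=
  forall (x : K) (e : R), 0 < e -> \forall y \near x, cnorm (g y - g x) < e.

Definition CK : set (K -> R[i]) := [set g | ccont g].
Definition supn (g : K -> R[i]) : R := sup (range (fun x => cnorm (g x))).

Definition ballB : set (K -> R[i]) := [set g | ccont g /\ supn g < 1].

Definition holoB (psi : (K -> R[i]) -> R[i]) : Prop :=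
  forall f, ballB f -> exists L : (K -> R[i]) -> R[i],
    (forall (a : R[i]) g h, ccont g -> ccont h ->
        L (fun x => a * g x + h x) = a * L g + L h) /\
    (exists c : R, forall h, ccont h -> cnorm (L h) <= c * supn h) /\
    (forall e : R, 0 < e -> exists d : R, 0 < d /\
       forall h, ccont h -> supn h < d -> ballB (fun x => f x + h x) ->
         cnorm (psi (fun x => f x + h x) - psi f - L h) <= e * supn h).

Definition boundedB (psi : (K -> R[i]) -> R[i]) : Prop :=
  exists M : R, forall f, ballB f -> cnorm (psi f) <= M.

Definition unifcontB (psi : (K -> R[i]) -> R[i]) : Prop :=
  forall e : R, 0 < e -> exists d : R, 0 < d /\
    forall f g, ballB f -> ballB g -> supn (fun x => f x - g x) < d ->
      cnorm (psi f - psi g) < e.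

Definition Hinf (psi : (K -> R[i]) -> R[i]) : Prop := holoB psi /\ boundedB psi.
Definition Au (psi : (K -> R[i]) -> R[i]) : Prop := Hinf psi /\ unifcontB psi.

Definition HB (u : bool) : ((K -> R[i]) -> R[i]) -> Prop :=
  fun psi => if u then Au psi else Hinf psi.

(* Spectrum M_{H(B)}: nonzero multiplicative complex-linear functionals on H(B).
   Elements of H(B) are represented by total functions on K -> C, so a
   functional must only depend on the values on B. *)
Definition spectrum (u : bool) (tau : ((K -> R[i]) -> R[i]) -> R[i]) : Prop :=
  (forall psi phi, HB u psi -> HB u phi ->
      (forall f, ballB f -> psi f = phi f) -> tau psi = tau phi) /\
  (forall (a : R[i]) psi phi, HB u psi -> HB u phi ->
      tau (fun f => a * psi f + phi f) = a * tau psi + tau phi) /\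
  (forall psi phi, HB u psi -> HB u phi ->
      tau (fun f => psi f * phi f) = tau psi * tau phi) /\
  (exists psi, HB u psi /\ tau psi != 0).

Definition fiberM (u : bool) (g0 : K -> R[i]) (tau : ((K -> R[i]) -> R[i]) -> R[i]) : Prop :=
  spectrum u tau /\ (forall g, Au g -> tau g = g g0).

Definition Tmap (f0 f : K -> R[i]) : K -> R[i] :=
  fun x => (f x - f0 x) / (1 - (f0 x)^* * f x).

Definition That (f0 : K -> R[i]) (tau : ((K -> R[i]) -> R[i]) -> R[i]) :
  ((K -> R[i]) -> R[i]) -> R[i] :=
  fun psi => tau (fun f => psi (Tmap f0 f)).

End Defs.

(* Main.v *)
Require Import Defs.
From mathcomp Require Import all_boot all_algebra all_classical all_reals all_analysis.
From mathcomp Require Import complex.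
From mathcomp Require Import ring lra.
Import order.Order.TTheory GRing.Theory Num.Theory numFieldNormedType.Exports.
Set Implicit Arguments. Unset Strict Implicit. Unset Printing Implicit Defensive.
Local Open Scope ring_scope.
Local Open Scope classical_set_scope.
Local Open Scope complex_scope.
Section Basics.
Variable R : realType.
Implicit Types z w : R[i].

Lemma normCE z : `|z| = (cnorm z)%:C.
Proof. by rewrite /cnorm normc_def. Qed.

Lemma cnorm_ge0 z : 0 <= cnorm z.
Proof. by rewrite /cnorm normc_def /= sqrtr_ge0. Qed.

Lemma cnormM z w : cnorm (z * w) = cnorm z * cnorm w.
Proof. by apply: (@complexI R); rewrite rmorphM -!normCE normrM. Qed.

Lemma cnormD z w : cnorm (z + w) <= cnorm z + cnorm w.
Proof. by rewrite -lecR rmorphD -!normCE ler_normD. Qed.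

Lemma cnormN z : cnorm (- z) = cnorm z.
Proof. by apply: (@complexI R); rewrite -!normCE normrN. Qed.

Lemma cnormB z w : cnorm (z - w) = cnorm (w - z).
Proof. by rewrite -cnormN opprB. Qed.

Lemma cnormV z : cnorm (z^-1) = (cnorm z)^-1.
Proof. by apply: (@complexI R); rewrite fmorphV -!normCE normfV. Qed.

Lemma cnorm0 : cnorm 0 = 0 :> R.
Proof. by apply: (@complexI R); rewrite -!normCE normr0. Qed.

Lemma cnorm1 : cnorm 1 = 1 :> R.
Proof. by apply: (@complexI R); rewrite -!normCE normr1. Qed.

Lemma cnorm_eq0 z : (cnorm z == 0) = (z == 0).
Proof. by rewrite -(inj_eq (@complexI R)) -normCE normr_eq0. Qed.

Lemma cnormJ z : cnorm (z^*) = cnorm z.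
Proof. by case: z => a b; rewrite /cnorm !normc_def /= sqrrN. Qed.

Lemma cnormR (k : R) : cnorm k%:C = `|k|.
Proof. by rewrite /cnorm normc_def /= expr0n /= addr0 sqrtr_sqr. Qed.

Lemma cnormBD z w : `|cnorm z - cnorm w| <= cnorm (z - w).
Proof.
rewrite ler_norml; apply/andP; split.
  have := cnormD (w - z) z; rewrite subrK cnormB; lra.
have := cnormD (z - w) w; rewrite subrK; lra.
Qed.

Lemma mulJ z : z^* * z = ((cnorm z)^+2)%:C.
Proof. by rewrite mulrC rmorphXn /= -normCE normcE sqr_sqrtc. Qed.

Lemma mulJ' z : ((cnorm z)%:C) ^+ 2 = z^* * z.
Proof. by rewrite mulJ rmorphXn. Qed.

End Basics.

Section Sup.
Variables (R : realType) (K : topologicalType).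
Hypothesis cK : compact [set: K].
Implicit Types g h : K -> R[i].

Lemma cbounded_of_cont (phi : K -> R) :
  continuous phi -> exists M, forall x, `|phi x| <= M.
Proof.
move=> cphi.
have : compact (phi @` setT) by apply: continuous_compact => //; exact: continuous_subspaceT.
move=> /compact_bounded [M [_ HM]].
exists (M + 1) => x; apply: HM; first lra.
by exists x.
Qed.

Lemma ccont_bounded g : ccont g -> exists M, forall x, cnorm (g x) <= M.
Proof.
move=> cg.
have : continuous (fun x => cnorm (g x)).
  move=> x; apply/cvgrPdist_lt => e e0.
  apply: filterS (cg x e e0) => y /= Hy.
  rewrite cnormB in Hy; exact: (le_lt_trans (cnormBD _ _) Hy).
move=> /cbounded_of_cont [M HM]; exists M => x.
by apply: le_trans (HM x); exact: ler_norm.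
Qed.

Lemma supn_ub g : (exists M, forall x, cnorm (g x) <= M) ->
  forall x, cnorm (g x) <= supn g.
Proof.
move=> [M HM] x; apply: ub_le_sup; last by exists x.
by exists M => _ [y _ <-].
Qed.

Lemma supn_le g M : 0 <= M -> (forall x, cnorm (g x) <= M) -> supn g <= M.
Proof.
move=> M0 HM; rewrite /supn.
have [[x _]|nK] := pselect (exists x : K, True).
  apply: ge_sup; first by exists (cnorm (g x)); exists x.
  by move=> _ [y _ <-].
have -> : range (fun x => cnorm (g x)) = set0.
  by apply/seteqP; split => // t [y _ _]; apply: nK; exists y.
by rewrite sup0.
Qed.

Lemma supn_ge0 g : (exists M, forall x, cnorm (g x) <= M) -> 0 <= supn g.
Proof.
move=> Hb; rewrite /supn.
have [[x _]|nK] := pselect (exists x : K, True).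
  by apply: le_trans (supn_ub Hb x); exact: cnorm_ge0.
have -> : range (fun x => cnorm (g x)) = set0.
  by apply/seteqP; split => // t [y _ _]; apply: nK; exists y.
by rewrite sup0.
Qed.

End Sup.

Section Cont.
Variables (R : realType) (K : topologicalType).
Implicit Types g h : K -> R[i].

Lemma ccontC (c : R[i]) : ccont (fun _ : K => c).
Proof.
move=> x e e0; apply: nearW => y; by rewrite subrr cnorm0.
Qed.

Lemma ccontD g h : ccont g -> ccont h -> ccont (fun x => g x + h x).
Proof.
move=> cg ch x e e0.
have e2 : 0 < e / 2 by rewrite divr_gt0.
apply: filterS2 (cg x _ e2) (ch x _ e2) => y H1 H2.
have -> : g y + h y - (g x + h x) = (g y - g x) + (h y - h x) by ring.
apply: le_lt_trans (cnormD _ _) _; lra.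
Qed.

Lemma ccontN g : ccont g -> ccont (fun x => - g x).
Proof.
move=> cg x e e0; apply: filterS (cg x e e0) => y H.
by rewrite -opprD cnormN.
Qed.

Lemma ccontJ g : ccont g -> ccont (fun x => (g x)^*).
Proof.
move=> cg x e e0; apply: filterS (cg x e e0) => y H.
by rewrite -rmorphB cnormJ.
Qed.

Lemma ccontM g h : ccont g -> ccont h -> ccont (fun x => g x * h x).
Proof.
move=> cg ch x e e0.
set a := cnorm (g x); set b := cnorm (h x).
have a0 : 0 <= a by exact: cnorm_ge0.
have b0 : 0 <= b by exact: cnorm_ge0.
have d1 : 0 < e / (2 * (b + 1)) by rewrite divr_gt0 // mulr_gt0 //; lra.
have d2 : 0 < Num.min 1 (e / (2 * (a + 1))).
  by rewrite lt_min ltr01 /= divr_gt0 // mulr_gt0 //; lra.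
apply: filterS2 (cg x _ d1) (ch x _ d2) => y H1 H2.
have -> : g y * h y - g x * h x = (g y - g x) * h y + g x * (h y - h x) by ring.
apply: le_lt_trans (cnormD _ _) _; rewrite !cnormM.
move: H2; rewrite lt_min => /andP[/ltW Hm1 /ltW Hm2].
have Hhy : cnorm (h y) <= b + 1.
  have := cnormD (h y - h x) (h x); rewrite subrK /b; lra.
have P1 : cnorm (g y - g x) * cnorm (h y) < e / 2.
  have -> : e / 2 = e / (2 * (b + 1)) * (b + 1) by field; lra.
  have Q1 : cnorm (g y - g x) * cnorm (h y) <= cnorm (g y - g x) * (b + 1).
    by apply: ler_wpM2l => //; exact: cnorm_ge0.
  have Q2 : cnorm (g y - g x) * (b + 1) < e / (2 * (b + 1)) * (b + 1).
    by rewrite ltr_pM2r //; lra.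
  lra.
have P2 : a * cnorm (h y - h x) < e / 2.
  have Q1 : a * cnorm (h y - h x) <= a * (e / (2 * (a + 1))) by apply: ler_wpM2l.
  suff : a * (e / (2 * (a + 1))) < e / 2 by lra.
  have -> : a * (e / (2 * (a + 1))) = e / 2 * (a / (a + 1)) by field; lra.
  rewrite gtr_pMr; last by rewrite divr_gt0.
  rewrite ltr_pdivrMr; lra.
lra.
Qed.

Lemma ccontV g (m : R) : 0 < m -> (forall x, m <= cnorm (g x)) ->
  ccont g -> ccont (fun x => (g x)^-1).
Proof.
move=> m0 Hm cg x e e0.
have d : 0 < e * (m * m) by rewrite !mulr_gt0.
apply: filterS (cg x _ d) => y H.
have gy0 : g y != 0 by rewrite -cnorm_eq0; have := Hm y; apply: contraTneq => ->; lra.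
have gx0 : g x != 0 by rewrite -cnorm_eq0; have := Hm x; apply: contraTneq => ->; lra.
have -> : (g y)^-1 - (g x)^-1 = (g x - g y) * ((g y)^-1 * (g x)^-1) by field; rewrite gy0 gx0.
rewrite cnormM cnormM !cnormV cnormB.
have ? := Hm x; have ? := Hm y.
have py : 0 < cnorm (g y) by lra.
have px : 0 < cnorm (g x) by lra.
rewrite -invfM ltr_pdivrMr ?mulr_gt0 //.
apply: lt_le_trans H _; rewrite ler_pM2l //.
by apply: ler_pM; lra.
Qed.

End Cont.

Lemma real_key (R : realType) (t D q : R) : 0 <= t -> 0 < D -> D <= 2 -> 0 <= q ->
  q <= D ^+ 2 * (1 - t ^+ 2) -> t <= 1 - q / 8.
Proof.
move=> t0 D0 D2 q0 H.
have H1 : 0 <= 1 - t ^+ 2.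
  rewrite leNgt; apply/negP => Hn.
  have : D ^+ 2 * (1 - t ^+ 2) < 0 by rewrite pmulr_rlt0 // exprn_gt0.
  lra.
have H2 : D ^+ 2 * (1 - t ^+ 2) <= 4 * (1 - t ^+ 2).
  apply: ler_wpM2r => //; rewrite (_ : 4 = 2 ^+ 2); last by rewrite expr2; lra.
  by apply: lerXn2r; rewrite ?nnegrE //; lra.
have H3 : 2 * t <= 1 + t ^+ 2 by have := sqr_ge0 (t - 1); rewrite sqrrB; lra.
lra.
Qed.

Lemma cnorm_sqr (R : realType) (u : R[i]) : cnorm u ^+ 2 = complex.Re u ^+ 2 + complex.Im u ^+ 2.
Proof. by rewrite /cnorm normc_def /= sqr_sqrtr // addr_ge0 // sqr_ge0. Qed.
Lemma key_id (R : realType) (w z : R[i]) :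
  cnorm (1 - w^* * z) ^+ 2 - cnorm (z - w) ^+ 2 = (1 - cnorm z ^+ 2) * (1 - cnorm w ^+ 2).
Proof.
rewrite !cnorm_sqr; case: w => a b; case: z => c d /=. ring.
Qed.

Section Pointwise.
Variable R : realType.
Variables (w : R[i]) (s0 : R).
Hypotheses (s00 : 0 <= s0) (s01 : s0 < 1) (hw : cnorm w <= s0).

Ltac prep := have ? := s00; have ? := s01; have ? := hw.

Definition Tp (z : R[i]) := (z - w) / (1 - w^* * z).
Definition Wp (z : R[i]) := (1 - w^* * w) * ((1 - w^* * z)^-1 * (1 - w^* * z)^-1).

Lemma div_le (p D B m : R) : 0 <= p -> p <= B -> 0 < m -> m <= D -> p / D <= B / m.
Proof.
prep.
move=> p0 pB m0 mD.
have D0 : 0 < D by apply: lt_le_trans mD.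
rewrite ler_pdivrMr // mulrAC ler_pdivlMr //.
apply: ler_pM => //; lra.
Qed.

Lemma cnormJM z : cnorm (w^* * z) <= s0 * cnorm z.
Proof. prep; by rewrite cnormM cnormJ; apply: ler_wpM2r => //; exact: cnorm_ge0. Qed.

Lemma den_lb z : cnorm z <= 1 -> 1 - s0 <= cnorm (1 - w^* * z).
Proof.
prep.
move=> z1; have := cnormD (1 - w^* * z) (w^* * z); rewrite subrK cnorm1.
have := cnormJM z; have := ler_wpM2l s00 z1; rewrite mulr1; lra.
Qed.

Lemma den_ub z : cnorm z <= 1 -> cnorm (1 - w^* * z) <= 2.
Proof.
prep.
move=> z1; apply: le_trans (cnormD _ _) _; rewrite cnormN cnorm1.
have := cnormJM z; have := ler_wpM2l s00 z1; rewrite mulr1; lra.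
Qed.

Lemma den_neq0 z : cnorm z <= 1 -> 1 - w^* * z != 0.
Proof.
prep.
move=> z1; rewrite -cnorm_eq0; have := den_lb z1; apply: contraTneq => ->; lra.
Qed.

Lemma den_inv_le z : cnorm z <= 1 -> cnorm ((1 - w^* * z)^-1) <= (1 - s0)^-1.
Proof.
prep.
move=> z1; rewrite cnormV.
have := den_lb z1 => H.
rewrite lef_pV2 ?posrE //; lra.
Qed.

Lemma Tp_diff z y : cnorm z <= 1 -> cnorm y <= 1 ->
  Tp z - Tp y = (z - y) * (1 - w^* * w) * ((1 - w^* * z)^-1 * (1 - w^* * y)^-1).
Proof.
prep.
move=> z1 y1; have := den_neq0 z1; have := den_neq0 y1; move=> Hy Hz.
rewrite /Tp; field; by rewrite Hy Hz.
Qed.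

Lemma Tp_lip z y : cnorm z <= 1 -> cnorm y <= 1 ->
  cnorm (Tp z - Tp y) <= 2 / ((1 - s0) * (1 - s0)) * cnorm (z - y).
Proof.
prep.
move=> z1 y1; rewrite Tp_diff // !cnormM.
have h1 := den_inv_le z1; have h2 := den_inv_le y1.
have h3 : cnorm (1 - w^* * w) <= 2.
  by apply: den_ub; apply: le_trans hw _; lra.
have g1 := cnorm_ge0 (z - y); have g2 := cnorm_ge0 (1 - w^* * w).
have g3 := cnorm_ge0 ((1 - w^* * z)^-1); have g4 := cnorm_ge0 ((1 - w^* * y)^-1).
have Hm : 0 < 1 - s0 by lra.
have H : cnorm (1 - w^* * w) * (cnorm (1 - w^* * z)^-1 * cnorm (1 - w^* * y)^-1)
   <= 2 * ((1 - s0)^-1 * (1 - s0)^-1).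
  apply: ler_pM; rewrite ?mulr_ge0 //; exact: ler_pM.
rewrite invfM -mulrA [_ * cnorm (z - y)]mulrC; exact: ler_wpM2l.
Qed.

Lemma Wp_le z : cnorm z <= 1 -> cnorm (Wp z) <= 2 / ((1 - s0) * (1 - s0)).
Proof.
prep.
move=> z1; rewrite /Wp !cnormM.
have h1 := den_inv_le z1.
have h3 : cnorm (1 - w^* * w) <= 2.
  by apply: den_ub; apply: le_trans hw _; lra.
have g2 := cnorm_ge0 (1 - w^* * w).
have g3 := cnorm_ge0 ((1 - w^* * z)^-1).
rewrite invfM; apply: ler_pM; rewrite ?mulr_ge0 //; exact: ler_pM.
Qed.

Lemma Tp_second z h : cnorm z <= 1 -> cnorm (z + h) <= 1 ->
  cnorm (Tp (z + h) - Tp z - Wp z * h) <=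
    2 / ((1 - s0) * (1 - s0) * (1 - s0)) * (cnorm h ^+ 2).
Proof.
prep.
move=> z1 zh1.
have := den_neq0 z1; have := den_neq0 zh1; move=> Hzh Hz.
have -> : Tp (z + h) - Tp z - Wp z * h =
   h ^+ 2 * w^* * (1 - w^* * w) * ((1 - w^* * z)^-1 * (1 - w^* * z)^-1 * (1 - w^* * (z + h))^-1).
  by rewrite /Tp /Wp; field; rewrite Hzh Hz.
rewrite expr2 !cnormM cnormJ -expr2.
have h1 := den_inv_le z1; have h2 := den_inv_le zh1.
have h3 : cnorm (1 - w^* * w) <= 2.
  by apply: den_ub; apply: le_trans hw _; lra.
have g1 := cnorm_ge0 h; have g2 := cnorm_ge0 (1 - w^* * w).
have g3 := cnorm_ge0 ((1 - w^* * z)^-1); have g4 := cnorm_ge0 ((1 - w^* * (z + h))^-1).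
have g5 := cnorm_ge0 w.
have Hm : 0 < 1 - s0 by lra.
have w1 : cnorm w <= 1 by lra.
have E : forall (a b c d : R), a * b * c * d = a * (b * c * d) by move=> *; ring.
rewrite E [_ * cnorm h ^+ 2]mulrC; apply: ler_wpM2l; first exact: exprn_ge0.
rewrite !invfM -[2]mul1r.
apply: ler_pM; rewrite ?mulr_ge0 //.
  apply: ler_pM; rewrite ?mulr_ge0 //.
apply: ler_pM; rewrite ?mulr_ge0 //.
exact: ler_pM.
Qed.

Lemma Tp_norm z s : 0 <= s -> s < 1 -> cnorm z <= s ->
  cnorm (Tp z) <= 1 - (1 - s) * (1 - s0) / 8.
Proof.
prep.
move=> s0' s1 zs.
have z1 : cnorm z <= 1 by lra.
have Id : cnorm (1 - w^* * z) ^+ 2 - cnorm (z - w) ^+ 2 =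
    (1 - cnorm z ^+ 2) * (1 - cnorm w ^+ 2).
  exact: key_id.
have Dl := den_lb z1.
set D := cnorm (1 - w^* * z) in Dl Id *.
set N := cnorm (z - w) in Id *.
have Dpos : 0 < D by lra.
have -> : cnorm (Tp z) = N / D by rewrite /Tp cnormM cnormV.
apply: (real_key (D := D)); rewrite ?divr_ge0 ?cnorm_ge0 //.
- by apply: den_ub.
- by rewrite mulr_ge0 //; lra.
have -> : D ^+ 2 * (1 - (N / D) ^+ 2) = D ^+ 2 - N ^+ 2.
  by field; rewrite gt_eqF.
rewrite Id; have g := cnorm_ge0 z; have gw := cnorm_ge0 w.
apply: ler_pM; try lra.
- have : cnorm z ^+ 2 <= cnorm z by rewrite expr2 ler_piMl.
  lra.
- have : cnorm w ^+ 2 <= cnorm w by rewrite expr2 ler_piMl //; lra.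
  lra.
Qed.

End Pointwise.

Section Main.
Variables (R : realType) (K : topologicalType).
Hypothesis cK : compact [set: K].
Implicit Types f g h : K -> R[i].

Lemma ccont_bnd g : ccont g -> exists M, forall x, cnorm (g x) <= M.
Proof. exact: (ccont_bounded cK). Qed.

Lemma ball_ptw f : ballB f -> forall x, cnorm (f x) <= supn f.
Proof. by move=> [cf _]; apply: supn_ub; exact: ccont_bnd. Qed.

Lemma ball_ge0 f : ballB f -> 0 <= supn f.
Proof. by move=> [cf _]; apply: supn_ge0; exact: ccont_bnd. Qed.

Lemma ball_lt1 f : ballB f -> supn f < 1.
Proof. by case. Qed.

Lemma ball_ptw1 f : ballB f -> forall x, cnorm (f x) <= 1.
Proof. by move=> hf x; apply: le_trans (ball_ptw hf x) _; apply/ltW/ball_lt1. Qed.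

Lemma Tmap_ptw f0 f x : Tmap f0 f x = Tp (f0 x) (f x).
Proof. by []. Qed.

Lemma den_ptw f0 f x : ballB f0 -> ballB f ->
  1 - supn f0 <= cnorm (1 - (f0 x)^* * f x).
Proof.
move=> hf0 hf; apply: den_lb; [exact: ball_ge0 | exact: ball_lt1 | exact: ball_ptw | exact: ball_ptw1].
Qed.

Lemma ccont_den_inv f0 f : ballB f0 -> ballB f ->
  ccont (fun x => (1 - (f0 x)^* * f x)^-1).
Proof.
move=> hf0 hf; have := ball_lt1 hf0 => H.
apply: (@ccontV _ _ _ (1 - supn f0)); first lra.
  by move=> x; exact: den_ptw.
apply: ccontD; first exact: ccontC.
apply: ccontN; apply: ccontM; [apply: ccontJ; exact: hf0.1 | exact: hf.1].
Qed.

Lemma ccont_Tmap f0 f : ballB f0 -> ballB f -> ccont (Tmap f0 f).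
Proof.
move=> hf0 hf; rewrite /Tmap; apply: ccontM; last exact: ccont_den_inv.
apply: ccontD; [exact: hf.1 | apply: ccontN; exact: hf0.1].
Qed.

Lemma Tmap_ball f0 f : ballB f0 -> ballB f -> ballB (Tmap f0 f).
Proof.
move=> hf0 hf; split; first exact: ccont_Tmap.
have s00 := ball_ge0 hf0; have s01 := ball_lt1 hf0.
have s0 := ball_ge0 hf; have s1 := ball_lt1 hf.
apply: le_lt_trans (_ : supn (Tmap f0 f) <= 1 - (1 - supn f) * (1 - supn f0) / 8) _.
  apply: supn_le.
    have : (1 - supn f) * (1 - supn f0) <= 1.
      by rewrite -[1]mulr1; apply: ler_pM; lra.
    lra.
  move=> x; rewrite Tmap_ptw; apply: Tp_norm => //; [exact: ball_ptw | exact: ball_ptw].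
have : 0 < (1 - supn f) * (1 - supn f0) by apply: mulr_gt0; lra.
lra.
Qed.

Definition C1 f0 : R := 2 / ((1 - supn f0) * (1 - supn f0)).
Definition C2 f0 : R := 2 / ((1 - supn f0) * (1 - supn f0) * (1 - supn f0)).

Lemma C1_gt0 f0 : ballB f0 -> 0 < C1 f0.
Proof. move=> hf0; have := ball_lt1 hf0 => H; rewrite /C1 divr_gt0 // mulr_gt0 //; lra. Qed.

Lemma C2_gt0 f0 : ballB f0 -> 0 < C2 f0.
Proof. move=> hf0; have := ball_lt1 hf0 => H; rewrite /C2 divr_gt0 // !mulr_gt0 //; lra. Qed.

Lemma ccontB f g : ccont f -> ccont g -> ccont (fun x => f x - g x).
Proof. by move=> cf cg; apply: ccontD => //; exact: ccontN. Qed.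

Lemma Tmap_lip f0 f g : ballB f0 -> ballB f -> ballB g ->
  supn (fun x => Tmap f0 f x - Tmap f0 g x) <= C1 f0 * supn (fun x => f x - g x).
Proof.
move=> hf0 hf hg.
have cfg : ccont (fun x => f x - g x) by apply: ccontB; [exact: hf.1 | exact: hg.1].
have bfg := ccont_bnd cfg.
apply: supn_le.
  by apply: mulr_ge0; [exact/ltW/C1_gt0 | exact: supn_ge0].
move=> x; rewrite !Tmap_ptw.
apply: le_trans.
  apply: (Tp_lip (ball_ge0 hf0) (ball_lt1 hf0) (ball_ptw hf0 x)); exact: ball_ptw1.
rewrite -/(C1 f0); apply: ler_wpM2l; first exact/ltW/C1_gt0.
exact: supn_ub.
Qed.

Lemma bounded_comp f0 psi : ballB f0 -> boundedB psi -> boundedB (fun f => psi (Tmap f0 f)).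
Proof. by move=> hf0 [M HM]; exists M => f hf; apply: HM; exact: Tmap_ball. Qed.

Lemma unifcont_comp f0 psi : ballB f0 -> unifcontB psi ->
  unifcontB (fun f => psi (Tmap f0 f)).
Proof.
move=> hf0 Hu e e0; have [d [d0 Hd]] := Hu e e0.
have C0 := C1_gt0 hf0.
exists (d / C1 f0); split; first by rewrite divr_gt0.
move=> f g hf hg Hfg; apply: Hd; [exact: Tmap_ball | exact: Tmap_ball |].
apply: le_lt_trans (Tmap_lip hf0 hf hg) _.
by rewrite mulrC -ltr_pdivlMr.
Qed.

Lemma ccont_W f0 f : ballB f0 -> ballB f -> ccont (fun x => Wp (f0 x) (f x)).
Proof.
move=> hf0 hf; rewrite /Wp; apply: ccontM.
  apply: ccontD; first exact: ccontC.
  apply: ccontN; apply: ccontM; [apply: ccontJ; exact: hf0.1 | exact: hf0.1].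
by apply: ccontM; exact: ccont_den_inv.
Qed.

Lemma W_le f0 f x : ballB f0 -> ballB f -> cnorm (Wp (f0 x) (f x)) <= C1 f0.
Proof.
move=> hf0 hf; apply: (Wp_le (ball_ge0 hf0) (ball_lt1 hf0) (ball_ptw hf0 x)).
exact: ball_ptw1.
Qed.

Lemma holo_comp f0 psi : ballB f0 -> holoB psi -> holoB (fun f => psi (Tmap f0 f)).
Proof.
move=> hf0 Hpsi f hf.
have hTf := Tmap_ball hf0 hf.
have [L [Llin [[c Lb] Lrem]]] := Hpsi _ hTf.
set W := fun x => Wp (f0 x) (f x).
have cW : ccont W by exact: ccont_W.
have WC x : cnorm (W x) <= C1 f0 by exact: W_le.
have C0 := C1_gt0 hf0; have C20 := C2_gt0 hf0.
have s01 := ball_lt1 hf0.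
have supWh h : ccont h -> supn (fun x => W x * h x) <= C1 f0 * supn h.
  move=> ch; apply: supn_le.
    by apply: mulr_ge0; [lra | apply: supn_ge0; exact: ccont_bnd].
  move=> x; rewrite cnormM; apply: ler_pM; rewrite ?cnorm_ge0 //.
  by apply: supn_ub; exact: ccont_bnd.
have Lb' h : ccont h -> cnorm (L h) <= `|c| * supn h.
  move=> ch; apply: le_trans (Lb h ch) _; apply: ler_wpM2r; last exact: ler_norm.
  by apply: supn_ge0; exact: ccont_bnd.
exists (fun h => L (fun x => W x * h x)); split.
  move=> a g h cg ch /=.
  have -> : (fun x => W x * (a * g x + h x)) = (fun x => a * (W x * g x) + W x * h x).
    by apply: funext => x; ring.
  by apply: Llin; apply: ccontM.
split.
  exists (`|c| * C1 f0) => h ch.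
  apply: le_trans (Lb' _ (ccontM cW ch)) _.
  rewrite -mulrA; apply: ler_wpM2l => //; exact: supWh.
move=> e e0.
have e1pos : 0 < e / (2 * C1 f0) by rewrite divr_gt0 // mulr_gt0.
have [d1 [d1pos Hd1]] := Lrem _ e1pos.
set c' := `|c|.
have c'0 : 0 <= c' by exact: normr_ge0.
have cC0 : 0 <= c' * C2 f0 by apply: mulr_ge0 => //; lra.
exists (Num.min (d1 / C1 f0) (e / (2 * (c' * C2 f0 + 1)))); split.
  by rewrite lt_min !divr_gt0 // ?mulr_gt0 //; lra.
move=> h ch; rewrite lt_min => /andP[hs1 hs2] hball.
set g := (fun x => f x + h x) in hball *.
have hS0 : 0 <= supn h by apply: supn_ge0; exact: ccont_bnd.
have hTg := Tmap_ball hf0 hball.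
set k := fun x => Tmap f0 g x - Tmap f0 f x.
have ck : ccont k by apply: ccontB; [exact: hTg.1 | exact: hTf.1].
have Egf : (fun x => g x - f x) = h by apply: funext => x; rewrite /g; ring.
have ksup : supn k <= C1 f0 * supn h.
  by have := Tmap_lip hf0 hball hf; rewrite Egf.
have ksmall : supn k < d1.
  apply: le_lt_trans ksup _; by rewrite mulrC -ltr_pdivlMr.
have Ek : (fun x => Tmap f0 f x + k x) = Tmap f0 g.
  by apply: funext => x; rewrite /k; ring.
have HR := Hd1 k ck ksmall; rewrite Ek in HR; have {HR} HR := HR hTg.
set r := fun x => k x - W x * h x.
have cr : ccont r by apply: ccontB => //; exact: ccontM.
have ELr : L (fun x => W x * h x) = -1 * L r + L k.
  rewrite -Llin //; congr L; apply: funext => x; rewrite /r; ring.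
have rsup : supn r <= C2 f0 * supn h ^+ 2.
  apply: supn_le; first by apply: mulr_ge0; [lra | exact: exprn_ge0].
  move=> x; rewrite /r /k !Tmap_ptw /g /W.
  apply: le_trans.
    apply: (Tp_second (ball_ge0 hf0) (ball_lt1 hf0) (ball_ptw hf0 x)).
      exact: ball_ptw1.
    exact: (ball_ptw1 hball).
  rewrite -/(C2 f0); apply: ler_wpM2l; first lra.
  apply: lerXn2r; rewrite ?nnegrE ?cnorm_ge0 //.
  by apply: supn_ub; exact: ccont_bnd.
rewrite /= ELr.
have -> : psi (Tmap f0 g) - psi (Tmap f0 f) - (-1 * L r + L k) =
  (psi (Tmap f0 g) - psi (Tmap f0 f) - L k) + L r by ring.
apply: le_trans (cnormD _ _) _.
have P1 : e / (2 * C1 f0) * supn k <= e / 2 * supn h.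
  apply: le_trans (_ : e / (2 * C1 f0) * (C1 f0 * supn h) <= _).
    by apply: ler_wpM2l => //; apply/ltW.
  have -> : e / (2 * C1 f0) * (C1 f0 * supn h) = e / 2 * supn h.
    by field; rewrite gt_eqF.
  by [].
have P2 : cnorm (L r) <= e / 2 * supn h.
  apply: le_trans (Lb' _ cr) _.
  apply: le_trans (_ : c' * (C2 f0 * supn h ^+ 2) <= _).
    exact: ler_wpM2l.
  have -> : c' * (C2 f0 * supn h ^+ 2) = (c' * C2 f0 * supn h) * supn h.
    by rewrite expr2; ring.
  apply: ler_wpM2r => //.
  have H1 : c' * C2 f0 * supn h <= (c' * C2 f0 + 1) * supn h.
    by apply: ler_wpM2r => //; lra.
  have H2 : (c' * C2 f0 + 1) * supn h <= (c' * C2 f0 + 1) * (e / (2 * (c' * C2 f0 + 1))).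
    by apply: ler_wpM2l; [lra | apply/ltW].
  have E2 : (c' * C2 f0 + 1) * (e / (2 * (c' * C2 f0 + 1))) = e / 2.
    by field; rewrite gt_eqF //; lra.
  rewrite E2 in H2.
  lra.
lra.
Qed.

Lemma HB_comp f0 u psi : ballB f0 -> HB u psi -> HB u (fun f => psi (Tmap f0 f)).
Proof.
move=> hf0; case: u => /=.
  move=> [[Hh Hb] Hu]; split; first split.
  - exact: holo_comp.
  - exact: bounded_comp.
  - exact: unifcont_comp.
move=> [Hh Hb]; split; [exact: holo_comp | exact: bounded_comp].
Qed.

Lemma HB_const u (c : R[i]) : HB u (fun _ : K -> R[i] => c).
Proof.
have Hh : holoB (fun _ : K -> R[i] => c).
  move=> f hf; exists (fun _ => 0); split.
    by move=> a g h _ _; rewrite mulr0 addr0.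
  split.
    by exists 0 => h _; rewrite mul0r cnorm0.
  move=> e e0; exists 1; split => // h ch _ _.
  rewrite subrr subr0 cnorm0; apply: mulr_ge0; first lra.
  by apply: supn_ge0; exact: ccont_bnd.
have Hb : boundedB (fun _ : K -> R[i] => c) by exists (cnorm c).
have Hu : unifcontB (fun _ : K -> R[i] => c).
  by move=> e e0; exists 1; split => // f g _ _ _; rewrite subrr cnorm0.
by case: u => /=; [split; first split | split].
Qed.

Lemma spectrum_That f0 u tau : ballB f0 -> spectrum u tau -> spectrum u (That f0 tau).
Proof.
move=> hf0 [wd [lin [mul [psi0 [Hpsi0 ne]]]]].
split.
  move=> psi phi Hpsi Hphi Heq; rewrite /That; apply: wd; try exact: HB_comp.
  by move=> f hf; apply: Heq; exact: Tmap_ball.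
split.
  move=> a psi phi Hpsi Hphi; rewrite /That.
  exact: (lin a _ _ (HB_comp hf0 Hpsi) (HB_comp hf0 Hphi)).
split.
  move=> psi phi Hpsi Hphi; rewrite /That.
  exact: (mul _ _ (HB_comp hf0 Hpsi) (HB_comp hf0 Hphi)).
exists (fun _ => 1); split; first exact: HB_const.
rewrite /That.
have E := mul psi0 (fun _ => 1) Hpsi0 (HB_const u 1).
have E2 : tau (fun f => psi0 f * 1) = tau psi0.
  by congr tau; apply: funext => f; rewrite mulr1.
rewrite E2 in E.
apply/negP => /eqP H; move/negP: ne; apply; apply/eqP.
by rewrite E H mulr0.
Qed.

Lemma Tmap_self f0 : Tmap f0 f0 = (fun _ => 0).
Proof. by apply: funext => x; rewrite /Tmap subrr mul0r. Qed.

Lemma Tmap_neg0 f0 : Tmap (fun x => - f0 x) (fun _ => 0) = f0.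
Proof.
apply: funext => x; rewrite /Tmap mulr0 subr0 invr1 mulr1 sub0r opprK //.
Qed.

Lemma ball_neg f0 : ballB f0 -> ballB (fun x => - f0 x).
Proof.
move=> [cf sf]; split; first exact: ccontN.
have -> : supn (fun x => - f0 x) = supn f0.
  rewrite /supn (_ : (fun x => cnorm (- f0 x)) = (fun x => cnorm (f0 x))) //.
  by apply: funext => x; exact: cnormN.
done.
Qed.

Lemma TS_id (w v z : R[i]) : v = - w -> Num.conj v = - Num.conj w ->
  1 - Num.conj v * z != 0 -> 1 - Num.conj w * w != 0 ->
  Tp w (Tp v z) = z.
Proof.
move=> hvw hv H1 H2; rewrite /Tp hv hvw.
rewrite hv in H1.
field; apply/andP; split; first exact: H1.
apply: contra_neq H2 => H; rewrite -H; ring.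
Qed.


Lemma TS_ball f0 f : ballB f0 -> ballB f ->
  Tmap f0 (Tmap (fun x => - f0 x) f) = f.
Proof.
move=> hf0 hf; apply: funext => x; rewrite !Tmap_ptw.
have hn := ball_neg hf0.
apply: TS_id => //.
- exact: rmorphN.
- apply: (den_neq0 (ball_ge0 hn) (ball_lt1 hn) (ball_ptw hn x)); exact: ball_ptw1.
- apply: (den_neq0 (ball_ge0 hf0) (ball_lt1 hf0) (ball_ptw hf0 x)); exact: ball_ptw1.
Qed.

End Main.

Unset Implicit Arguments.
Local Close Scope complex_scope.

Theorem lemma3p3 (R : realType) (K : topologicalType)
    (hK : hausdorff_space K) (cK : compact [set: K])
    (f0 : K -> R[i]) (hf0 : ballB f0) (u : bool) :
  (forall psi, HB u psi -> HB u (fun f => psi (Tmap f0 f))) /\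
  (forall tau, spectrum u tau -> spectrum u (That f0 tau)) /\
  (forall tau, fiberM u f0 tau -> fiberM u (fun _ : K => 0) (That f0 tau)) /\
  (forall sigma, fiberM u (fun _ : K => 0) sigma ->
     exists tau, fiberM u f0 tau /\
       (forall psi, HB u psi -> That f0 tau psi = sigma psi)).
Proof.
have hn := ball_neg hf0.
split; first by move=> psi Hpsi; exact: (HB_comp cK hf0 Hpsi).
split; first by move=> tau; exact: (spectrum_That cK hf0).
split.
  move=> tau [sp fib]; split; first exact: (spectrum_That cK hf0 sp).
  move=> g Hg; rewrite /That fib; last exact: (HB_comp cK hf0 (u:=true) Hg).
  by rewrite /= Tmap_self.
move=> sigma [sp fib]; exists (That (fun x => - f0 x) sigma); split.
  split; first exact: (spectrum_That cK hn sp).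
  move=> g Hg; rewrite /That fib; last exact: (HB_comp cK hn (u:=true) Hg).
  by rewrite /= Tmap_neg0.
move=> psi Hpsi; rewrite /That.
apply: (sp.1 _ _ _ Hpsi).
  exact: (HB_comp cK hn (HB_comp cK hf0 Hpsi)).
by move=> f hf /=; rewrite TS_ball.
Qed.
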